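(* Let $q$ be a power of an odd prime, $d\ge 2$, $r\in\mathbb F_q^*$. Define on $\mathbb F_q^{2d}$ the varieties $V_{\mathcal Q_r}=\{(x,x')\in\mathbb F_q^{2d}: \|x\|_Q-r\|x'\|_Q=0\}$ and $V_{\mathcal Q_r^*}=\{(m,m')\in\mathbb F_q^{2d}: \|m\|_{Q^*}-r^{-1}\|m'\|_{Q^*}=0\}$. Then for every $M\in\mathbb F_q^{2d}$: (i) if $d$ is even, $\widehat{V_{\mathcal Q_r}}(M)=\frac{\delta_0(M)}{q}+\frac{V_{\mathcal Q_r^*}(M)}{q^d}-\frac{1}{q^{d+1}}$; (ii) if $d$ is odd, $\widehat{V_{\mathcal Q_r}}(M)=\frac{\delta_0(M)}{q}+\frac{\eta(r)V_{\mathcal Q_r^*}(M)}{q^d}-\frac{\eta(r)}{q^{d+1}}$.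
   Context: $\eta$ is the quadratic character of $\mathbb F_q^*$ ($\eta(t)=1$ if $t$ is a nonzero square, $-1$ otherwise). Fix a symmetric $d\times d$ matrix $A$ over $\mathbb F_q$ with $\det A\ne0$. If $d$ is even: $\|x\|_Q=x_1^2-x_2^2+\dots+x_{d-1}^2-\varepsilon x_d^2$ and $\|m\|_{Q^*}=m_1^2-m_2^2+\dots+m_{d-1}^2-\varepsilon^{-1}m_d^2$, with $\varepsilon\in\mathbb F_q^*$ such that $\eta((-1)^{d/2}\varepsilon)=\eta(\det A)$. If $d$ is odd: $\|x\|_Q=x_1^2-x_2^2+\dots+x_{d-2}^2-x_{d-1}^2+\varepsilon x_d^2$ and $\|m\|_{Q^*}=m_1^2-m_2^2+\dots+m_{d-2}^2-m_{d-1}^2+\varepsilon^{-1}m_d^2$, with $\eta((-1)^{(d-1)/2}\varepsilon)=\eta(\det A)$. $\chi$ is the canonical additive character of $\mathbb F_q$ ($\chi(c)=e^{2\pi i\,\mathrm{Tr}(c)/p}$), the Fourier transform on $\mathbb F_q^{n}$ is $\widehat f(M)=q^{-n}\sum_X\chi(-M\cdot X)f(X)$, sets are identified with their indicator functions, and $\delta_0$ is the indicator of the origin. *)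

(* Defs.v *)
From HB Require Import structures.
From mathcomp Require Import all_boot all_order all_algebra.
From mathcomp Require Import finfield algC.
Unset Printing Implicit Defensive.
Import Order.TTheory GRing.Theory Num.Theory.
Local Open Scope ring_scope.

Definition qchar {F : finFieldType} (t : F) : algC :=
  if t == 0 then 0 else if [exists s : F, s ^+ 2 == t] then 1 else -1.

Definition char_p (F : finFieldType) : nat := pdiv #|F|.

Definition trace {F : finFieldType} (c : F) : F :=
  \sum_(i < logn (char_p F) #|F|) c ^+ (char_p F ^ i).

(* e^{2 pi i / p}: p.-root (-1) is the p-th root of -1 of minimal argument,
   i.e. e^{i pi / p}; its square is e^{2 pi i / p}. *)
Definition omega_p (p : nat) : algC := (p.-root (-1)) ^+ 2.

(* Canonical additive character chi(c) = e^{2 pi i Tr(c)/p}, where Tr(c)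
   is identified with the integer k in [0,p) such that Tr(c) = k%:R. *)
Definition addchar {F : finFieldType} (c : F) : algC :=
  match [pick k : 'I_(char_p F) | (k%:R : F) == trace c] with
  | Some k => omega_p (char_p F) ^+ k
  | None => 0
  end.

Definition dotv {F : finFieldType} {n : nat} (u v : 'rV[F]_n) : F :=
  \sum_(i < n) u 0 i * v 0 i.

Definition fourier {F : finFieldType} {n : nat} (f : 'rV[F]_n -> algC)
    (M : 'rV[F]_n) : algC :=
  (#|F|%:R ^- n) * \sum_(X : 'rV[F]_n) addchar (- dotv M X) * f X.

Definition coefQ {F : finFieldType} (d : nat) (eps : F) (i : nat) : F :=
  if (i.+1 < d)%N then (-1) ^+ i else if odd d then eps else - eps.

Definition normQ {F : finFieldType} (d : nat) (eps : F) (x : 'rV[F]_d) : F :=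
  \sum_(i < d) coefQ d eps i * x 0 i ^+ 2.

Definition normQstar {F : finFieldType} (d : nat) (eps : F) (m : 'rV[F]_d) : F :=
  normQ d eps^-1 m.

Definition VQ {F : finFieldType} (d : nat) (eps r : F) (X : 'rV[F]_(d + d)) : algC :=
  (normQ d eps (lsubmx X) - r * normQ d eps (rsubmx X) == 0)%:R.

Definition VQstar {F : finFieldType} (d : nat) (eps r : F) (M : 'rV[F]_(d + d)) : algC :=
  (normQstar d eps (lsubmx M) - r^-1 * normQstar d eps (rsubmx M) == 0)%:R.

Definition delta0 {F : finFieldType} {n : nat} (M : 'rV[F]_n) : algC := (M == 0)%:R.

(* Main.v *)
Require Import Defs.
From HB Require Import structures.
From mathcomp Require Import all_boot all_order all_algebra.
From mathcomp Require Import finfield algC cyclotomic zify ring.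
Import Order.TTheory GRing.Theory Num.Theory.
Local Open Scope ring_scope.
Lemma omega_exp {p : nat} : (0 < p)%N -> omega_p p ^+ p = 1.
Proof. by move=> p0; rewrite /omega_p -exprM mulnC exprM rootCK // sqrrN expr1n. Qed.

Lemma omega_neq1 {p : nat} : (1 < p)%N -> odd p -> omega_p p != 1.
Proof.
move=> p1 op; have p0 : (0 < p)%N by apply: ltnW.
have m1 : (1 : algC) != -1.
  by rewrite -subr_eq0 opprK -[1 + 1 : algC]/(2%:R) pnatr_eq0.
rewrite /omega_p sqrf_eq1; apply/negP => /orP[] /eqP hz.
  by have /= := rootCK p0 (-1 : algC); rewrite hz expr1n => /eqP; rewrite (negPf m1).
have [z pz] := C_prim_root_exists (ltn0Sn (2 * p).-1).
rewrite prednK ?muln_gt0 // in pz.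
have zp : z ^+ p = -1.
  have : (z ^+ p) ^+ 2 == 1 by rewrite -exprM mulnC prim_expr_order.
  rewrite sqrf_eq1 => /orP[] /eqP // e.
  move: e => /eqP; rewrite -(prim_order_dvd pz) => /dvdn_leq => /(_ p0).
  by rewrite leqNgt ltn_Pmull.
have zn1 : z != -1.
  apply/negP => /eqP e; move: (prim_order_dvd pz 2); rewrite e sqrrN expr1n eqxx.
  by move/dvdn_leq => /(_ isT) h; lia.
suff [y [yp yIm yn1]] : exists y : algC, [/\ y ^+ p = -1, 0 <= 'Im y & y != -1].
  have := rootC_Re_max p0 yp yIm; rewrite hz.
  have ny : `|y| = 1.
    apply/eqP; rewrite -(pexpr_eq1 p0) ?normr_ge0 // -normrX yp normrN normr1 //.
  have hre : `|'Re y| <= `|y| ?= iff (y \is Num.real) := leif_normC_Re_Creal y.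
  move=> hle.
  have Rre : 'Re (-1 : algC) = -1 by apply/Creal_ReP; rewrite rpredN1.
  rewrite Rre in hle.
  have : `|'Re y| = `|y|.
    apply/eqP; rewrite eq_le hre.1 ny.
    rewrite ler0_norm; last by apply: (le_trans hle); rewrite lerN10.
    by rewrite lerNr.
  move/eqP; rewrite hre.2 => yR.
  have : y ^+ 2 == 1 by rewrite -(real_normK yR) ny expr1n.
  rewrite sqrf_eq1 (negPf yn1) orbF => /eqP y1.
  by move: yp; rewrite y1 expr1n => /eqP; rewrite (negPf m1).
have ImR := Creal_Im z.
case: (boolP (0 <= 'Im z)) => hI; first by exists z.
exists z^*; split.
- by rewrite -rmorphXn zp rmorphN1.
- rewrite Im_conj oppr_ge0; move: hI; rewrite -real_ltNge ?rpred0 //; exact: ltW.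
- apply/negP => /eqP e; move: zn1; by rewrite -(conjCK z) e rmorphN1 eqxx.
Qed.
Section Trace.
Variable F : finFieldType.
Local Notation p := (char_p F).
Local Notation n := (logn (char_p F) #|F|).

Lemma charF_spec : [/\ prime p, p \in [pchar F], #|F| = (p ^ n)%N & (0 < n)%N].
Proof.
case: (finPcharP F) => p0 pr ch.
have card : #|F| = (p0 ^ logn p0 #|F|)%N by exact: (card_pprimeChar ch).
have gt1 := finNzRing_gt1 F.
have n0 : (0 < logn p0 #|F|)%N.
  rewrite lt0n; apply/negP => /eqP e; move: gt1; by rewrite card e.
have pe : p = p0.
  by rewrite /char_p card; move: n0; case: (logn p0 #|F|) => // k _; rewrite pdiv_pfactor.
by rewrite pe; split.
Qed.

Lemma p_prime : prime p. Proof. by case: charF_spec. Qed.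
Lemma p_char : p \in [pchar F]. Proof. by case: charF_spec. Qed.
Lemma p_gt0 : (0 < p)%N. Proof. exact: prime_gt0 p_prime. Qed.

Lemma frobD (x y : F) i : (x + y) ^+ (p ^ i) = x ^+ (p ^ i) + y ^+ (p ^ i).
Proof.
elim: i => [|i IH]; first by rewrite !expn0 !expr1.
by rewrite !expnSr !exprM IH -!(pFrobenius_autE p_char) rmorphD.
Qed.

Lemma traceD (a b : F) : trace (a + b) = trace a + trace b.
Proof. by rewrite /trace -big_split; apply: eq_bigr => i _; rewrite frobD. Qed.

Lemma trace0 : trace (0 : F) = 0.
Proof. by apply: (@addrI _ (trace (0:F))); rewrite -traceD !addr0. Qed.

Lemma trace_frob (c : F) : trace c ^+ p = trace c.
Proof.
rewrite /trace -(pFrobenius_autE p_char) rmorph_sum /=.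
have [_ _ card n0] := charF_spec.
under eq_bigr => i _ do rewrite pFrobenius_autE -exprM -expnSr.
move: card n0; case: n => // m card _.
rewrite big_ord_recr big_ord_recl /= expn0 expr1 -card expf_card addrC; congr (_ + _).
Qed.

Lemma natr_inj (k j : nat) : (k < p)%N -> (j < p)%N -> k%:R = j%:R :> F -> k = j.
Proof.
wlog kj : k j / (k <= j)%N.
  move=> W hk hj e; case: (leqP k j) => h; first exact: W.
  by symmetry; apply: W => //; apply: ltnW.
move=> hk hj e; apply/eqP; rewrite eqn_leq kj /=.
have : (p %| j - k)%N by rewrite (dvdn_pcharf p_char) natrB // e subrr.
case E: (j - k)%N => [|m]; first by move=> _; lia.
by move/dvdn_leq => /(_ isT); lia.
Qed.

Lemma prime_field (x : F) : x ^+ p = x -> exists k : 'I_p, k%:R = x.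
Proof.
move=> xp; case: (pickP (fun k : 'I_p => k%:R == x)) => [k /eqP hk | H]; first by exists k.
exfalso.
pose rs := x :: [seq (val k)%:R | k <- enum 'I_p] : seq F.
pose P : {poly F} := 'X^p - 'X.
have p1 : (1 < p)%N by apply: prime_gt1 p_prime.
have sP : size P = p.+1.
  by rewrite /P size_polyDl ?size_polyXn // size_polyN size_polyX ltnS.
have P0 : P != 0 by rewrite -size_poly_eq0 sP.
have := max_poly_roots P0.
have hr : all (root P) rs.
  apply/allP => y; rewrite inE => /orP[/eqP -> | /mapP[k _ ->]].
    by rewrite /root /P !hornerE xp subrr.
  by rewrite /root /P !hornerE -(pFrobenius_autE p_char) rmorph_nat subrr.
have hu : uniq rs.
  rewrite /= map_inj_uniq ?enum_uniq ?andbT.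
    by apply/mapP => -[k _ e]; move: (H k); rewrite e eqxx.
  move=> [a ha] [b hb] /= e; apply: val_inj => /=; exact: natr_inj ha hb e.
move/(_ rs hr hu); by rewrite sP /= size_map size_enum_ord ltnn.
Qed.

Lemma addcharE (c : F) :
  exists k : 'I_p, k%:R = trace c /\ addchar c = omega_p p ^+ k.
Proof.
rewrite /addchar; case: pickP => [k /eqP hk | none]; first by exists k.
have [k hk] := prime_field _ (trace_frob c).
by move: (none k); rewrite hk eqxx.
Qed.

Lemma addcharD (a b : F) : addchar (a + b) = addchar a * addchar b.
Proof.
have [ka [hka ->]] := addcharE a; have [kb [hkb ->]] := addcharE b.
have [k [hk ->]] := addcharE (a + b).
rewrite -exprD -[RHS](expr_mod _ (omega_exp p_gt0)); congr (_ ^+ _).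
apply: natr_inj => //; first by rewrite ltn_mod p_gt0.
by rewrite (GRing.natr_mod_pchar p_char) hk traceD -hka -hkb natrD.
Qed.

Lemma addchar0 : addchar (0 : F) = 1.
Proof.
have [k [hk ->]] := addcharE 0.
have -> : (k : nat) = 0%N by apply: natr_inj => //; rewrite ?p_gt0 // hk trace0.
by rewrite expr0.
Qed.

Lemma trace_nonzero : exists c : F, trace c != 0.
Proof.
case: (pickP (fun c : F => trace c != 0)) => [c hc | H]; first by exists c.
exfalso.
have [pr _ card n0] := charF_spec.
have p1 : (1 < p)%N by apply: prime_gt1.
pose P : {poly F} := \sum_(i < n) 'X^(p ^ i).
have P0 : P != 0.
  apply/negP => /eqP e; have := congr1 (fun Q : {poly F} => Q`_1) e.
  rewrite coef0 /P coef_sum (bigD1 (Ordinal n0)) //= expn0 coefXn eqxx big1 ?addr0.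
    by move/eqP; rewrite oner_eq0.
  move=> i /negP ni; rewrite coefXn; case: eqP => // e1; exfalso; apply: ni.
  apply/eqP/val_inj => /=; move: e1; case: (val i) => // j.
  by rewrite expnS => /esym/eqP; rewrite muln_eq1 => /andP[/eqP e2 _]; move: p1; rewrite e2.
have sP : (size P <= (p ^ n.-1).+1)%N.
  apply: (leq_trans (size_sum _ _ _)); apply/bigmax_leqP => i _.
  by rewrite size_polyXn ltnS leq_pexp2l // ?prime_gt0 // -ltnS prednK.
have := max_poly_roots P0.
have hr : all (root P) (enum F).
  apply/allP => y _; rewrite /root /P horner_sum.
  under eq_bigr do rewrite hornerXn.
  by move: (H y) => /= /negbFE.
move/(_ _ hr (enum_uniq _)) => hs.
have := leq_trans hs sP; rewrite -cardE.
move: n0 card; set N := logn _ _ => n0 card.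
by rewrite {1}card ltnS leqNgt ltn_exp2l // prednK // leqnn.
Qed.

Lemma p_odd : odd #|F| -> odd p.
Proof. by have [_ _ card n0] := charF_spec; rewrite {1}card oddX; case: (logn _ _) n0. Qed.

Lemma addchar_nontriv : odd #|F| -> exists c : F, addchar c != 1.
Proof.
move=> Hodd.
have [c hc] := trace_nonzero; exists c.
have [k [hk ->]] := addcharE c.
have [pr _ _ _] := charF_spec.
have k0 : (0 < k)%N by rewrite lt0n; apply: contraNneq hc => e; rewrite -hk e.
apply/negP => /eqP wk.
have [m pm] := prim_order_exists p_gt0 (omega_exp p_gt0).
case/primeP: pr => _ /(_ m) hm /hm /orP[] /eqP em.
  have := prim_expr_order pm; rewrite em expr1 => /eqP; apply/negP.
  by apply: omega_neq1; [exact: prime_gt1 p_prime | exact: p_odd Hodd].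
move: (prim_order_dvd pm k); rewrite em wk eqxx => /(dvdn_leq k0).
by rewrite leqNgt ltn_ord.
Qed.
End Trace.
Section Gauss.
Variable F : finFieldType.
Hypothesis Hodd : odd #|F|.
Local Notation q := (#|F|%:R : algC).
Local Notation chi := (@addchar F).
Local Notation eta := (@qchar F).
Definition issq (x : F) := [exists s : F, s ^+ 2 == x].

Lemma two_neq0 : (2%:R : F) != 0.
Proof.
apply/negP; rewrite -(dvdn_pcharf (p_char F)) => /(@dvdn_leq _ 2 isT).
have p1 := prime_gt1 (p_prime F); have po := @p_odd F Hodd.
by case: (char_p F) p1 po => [|[|[|]]].
Qed.

Lemma reindex_mul {a : F} (f : F -> algC) : a != 0 -> \sum_t f (a * t) = \sum_t f t.
Proof. by move=> a0; rewrite [RHS](reindex_inj (mulfI a0)). Qed.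

Lemma reindex_add (c : F) (f : F -> algC) : \sum_t f (c + t) = \sum_t f t.
Proof. by rewrite [RHS](reindex_inj (addrI c)). Qed.

Lemma sum_chi_lin (a : F) : \sum_t chi (a * t) = if a == 0 then q else 0.
Proof.
case: eqP => [-> | /eqP a0].
  by under eq_bigr do rewrite mul0r addchar0; rewrite sumr_const.
rewrite (reindex_mul chi a0).
have [c hc] := @addchar_nontriv F Hodd.
set S := \sum_t chi t.
have : S = chi c * S.
  by rewrite /S mulr_sumr -(reindex_add c); apply: eq_bigr => t _; rewrite addcharD.
move/eqP; rewrite -subr_eq0 -{1}[S]mul1r -mulrBl mulf_eq0 subr_eq0 eq_sym (negPf hc) /=.
by move/eqP.
Qed.

Lemma card_sq (u : F) :
  #|[pred t : F | t ^+ 2 == u]| = if u == 0 then 1%N else if issq u then 2%N else 0%N.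
Proof.
case: eqP => [-> | /eqP u0].
  rewrite -[RHS](card1 (0 : F)); apply: eq_card => t; by rewrite !inE sqrf_eq0.
case: (boolP (issq u)) => [/existsP[s /eqP hs] | ns].
  have sn : s != - s.
    apply/negP => /eqP e; move: u0; rewrite -hs.
    have : s *+ 2 == 0 by rewrite mulr2n {1}e addNr.
    by rewrite -mulr_natl mulf_eq0 (negPf two_neq0) /= => /eqP ->; rewrite expr0n eqxx.
  transitivity #|pred2 s (- s)|; last by rewrite card2 sn.
  apply: eq_card => t; by rewrite !inE -hs eqf_sqr.
apply: eq_card0 => t; rewrite !inE; apply/negP => ht; move/negP: ns; apply.
by apply/existsP; exists t.
Qed.

Lemma sum_sq (f : F -> algC) : \sum_t f (t ^+ 2) = \sum_u (1 + eta u) * f u.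
Proof.
rewrite (partition_big (fun t : F => t ^+ 2) xpredT) //=.
apply: eq_bigr => u _.
rewrite (eq_bigr (fun _ => f u)); last by move=> t /eqP ->.
rewrite sumr_const -mulr_natl; congr (_ * _).
have -> : #|[pred t : F | true && (t ^+ 2 == u)]| = #|[pred t : F | t ^+ 2 == u]| by apply: eq_card.
rewrite card_sq /qchar /issq; case: (u == 0); first by rewrite addr0.
by case: [exists _, _]; rewrite ?subrr //.
Qed.

Lemma eta_sum : \sum_u eta u = 0.
Proof.
have h := sum_sq (fun _ => (1 : algC)); simpl in h.
have e2 : \sum_u (1 + eta u) * 1 = \sum_u (1 + eta u) by apply: eq_bigr => u _; rewrite mulr1.
rewrite e2 big_split /= in h.
have := congr1 (fun x => x - \sum_(t : F) (1 : algC)) h; rewrite subrr /=.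
by rewrite addrAC subrr add0r => e; rewrite -e.
Qed.

Lemma issq_mul (a u : F) : issq a -> a != 0 -> issq (a * u) = issq u.
Proof.
case/existsP => s /eqP hs a0.
have s0 : s != 0 by apply: contraNneq a0 => e; rewrite -hs e expr0n.
apply/existsP/existsP => [[w /eqP hw] | [v /eqP hv]].
  exists (w / s); rewrite expr_div_n hw -hs [s ^+ 2 * u]mulrC mulfK //.
  by rewrite expf_neq0.
by exists (s * v); rewrite exprMn hs hv.
Qed.

Lemma eta0 : eta 0 = 0. Proof. by rewrite /qchar eqxx. Qed.

Lemma eta_nz (x : F) : x != 0 -> eta x = if issq x then 1 else -1.
Proof. by rewrite /qchar => /negPf ->. Qed.

Lemma eta_mul (a u : F) : eta (a * u) = eta a * eta u.
Proof.
case: (eqVneq a 0) => [-> | a0]; first by rewrite mul0r eta0 mul0r.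
case: (eqVneq u 0) => [-> | u0]; first by rewrite mulr0 eta0 mulr0.
have au0 : a * u != 0 by rewrite mulf_neq0.
rewrite !eta_nz //.
case: (boolP (issq a)) => ha /=; first by rewrite issq_mul // mul1r.
case: (boolP (issq u)) => hu /=; first by rewrite [a * u]mulrC issq_mul // (negPf ha) mulr1.
rewrite mulrNN mulr1.
have key : forall v : F, issq v -> v != 0 -> ~~ issq (a * v).
  by move=> v hv v0; rewrite mulrC issq_mul.
have H0 : \sum_v (- (eta (a * v) + eta v)) = 0.
  rewrite sumrN big_split /= eta_sum addr0.
  by rewrite (reindex_mul eta a0) eta_sum oppr0.
have Hge : forall v : F, true -> 0 <= - (eta (a * v) + eta v).
  move=> v _; case: (eqVneq v 0) => [-> | v0]; first by rewrite mulr0 eta0 addr0 oppr0.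
  have av0 : a * v != 0 by rewrite mulf_neq0.
  rewrite !eta_nz //; case: (boolP (issq v)) => hv.
    by rewrite (negPf (key v hv v0)) addNr oppr0.
  case: (issq (a * v)); first by rewrite subrr oppr0.
  by rewrite opprD !opprK -[1 + 1 : algC]/(2%:R) ler0n.
have := psumr_eq0P Hge H0 (i:=u) isT; rewrite !eta_nz // (negPf hu).
case: (issq (a * u)) => // /eqP; rewrite oppr_eq0 -opprD oppr_eq0.
by rewrite -[1 + 1 : algC]/(2%:R) pnatr_eq0.
Qed.

Lemma eta1 : eta 1 = 1.
Proof. rewrite eta_nz ?oner_eq0 //; have -> : issq 1 by apply/existsP; exists 1; rewrite expr1n. by []. Qed.

Lemma eta_sqr {a : F} : a != 0 -> eta a ^+ 2 = 1.
Proof. by move=> a0; rewrite eta_nz //; case: (issq a); rewrite ?sqrrN expr1n. Qed.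

Lemma eta_inv {a : F} : a != 0 -> eta a^-1 = eta a.
Proof.
move=> a0; have := eta_mul a a^-1; rewrite mulfV // eta1 => h.
by rewrite -[LHS]mul1r -(eta_sqr a0) expr2 -mulrA -h mulr1.
Qed.

Definition gs := \sum_v eta v * chi v.

Lemma gauss_a {a : F} : a != 0 -> \sum_t chi (a * t ^+ 2) = eta a * gs.
Proof.
move=> a0; rewrite (sum_sq (fun u => chi (a * u))).
under eq_bigr do rewrite mulrDl mul1r.
rewrite big_split /= sum_chi_lin (negPf a0) add0r.
have -> : \sum_u eta u * chi (a * u) = \sum_u (eta a^-1 * eta (a * u)) * chi (a * u).
  apply: eq_bigr => u _; by rewrite -eta_mul mulKf.
rewrite (reindex_mul (fun v => (eta a^-1 * eta v) * chi v) a0).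
by rewrite /gs mulr_sumr eta_inv //; apply: eq_bigr => v _; rewrite mulrA.
Qed.

Lemma gs_sqr : gs ^+ 2 = eta (-1) * q.
Proof.
have m10 : (-1 : F) != 0 by rewrite oppr_eq0 oner_eq0.
have idt : forall t v : F, 1 * t ^+ 2 + (-1) * (t + v) ^+ 2 = - v ^+ 2 + (- (2%:R * v)) * t.
  by move=> t v; ring.
have h : (\sum_t chi (1 * t ^+ 2)) * (\sum_u chi (-1 * u ^+ 2)) = q.
  transitivity (\sum_t \sum_v chi (- v ^+ 2) * chi (- (2%:R * v) * t)).
    rewrite mulr_suml; apply: eq_bigr => t _.
    rewrite mulr_sumr -(reindex_add t (fun u => chi (1 * t ^+ 2) * chi (-1 * u ^+ 2))) /=.
    by apply: eq_bigr => v _; rewrite -!addcharD idt.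
  rewrite exchange_big /=.
  transitivity (\sum_v chi (- v ^+ 2) * (if - (2%:R * v) == 0 then q else 0)).
    by apply: eq_bigr => v _; rewrite -mulr_sumr sum_chi_lin.
  rewrite (bigD1 0) //= big1 ?addr0.
    by rewrite mulr0 oppr0 eqxx expr0n /= oppr0 addchar0 mul1r.
  move=> v v0; rewrite oppr_eq0 mulf_eq0 (negPf two_neq0) (negPf v0) /=.
  by rewrite mulr0.
move: h; rewrite gauss_a ?oner_eq0 // gauss_a // eta1 mul1r => h.
rewrite -h; transitivity (eta (-1) ^+ 2 * gs ^+ 2); first by rewrite (eta_sqr m10) mul1r.
ring.
Qed.

Lemma coord_sum (s c m : F) : c != 0 ->
  \sum_t chi (s * c * t ^+ 2 - m * t) =
  if s == 0 then (if m == 0 then q else 0)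
  else chi (- (m ^+ 2 / (4%:R * (s * c)))) * (eta (s * c) * gs).
Proof.
move=> c0; case: eqP => [-> | /eqP s0].
  under eq_bigr do rewrite !mul0r add0r -mulNr.
  by rewrite sum_chi_lin oppr_eq0.
set a := s * c; have a0 : a != 0 by rewrite mulf_neq0.
have t0 := two_neq0.
set h := m / (2%:R * a).
rewrite -(reindex_add h (fun t => chi (a * t ^+ 2 - m * t))) /=.
have idt : forall w, a * (h + w) ^+ 2 - m * (h + w) = - (m ^+ 2 / (4%:R * a)) + a * w ^+ 2.
  have f0 : (4%:R : F) != 0 by rewrite -[4%N]/(2 * 2)%N natrM mulf_neq0.
  move=> w; rewrite /h; clearbody a; field; by rewrite a0 f0 t0.
under eq_bigr do rewrite idt addcharD.
by rewrite -mulr_sumr (gauss_a a0).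
Qed.

Lemma chi_sum (I : finType) (f : I -> F) : chi (\sum_i f i) = \prod_i chi (f i).
Proof. exact: (big_morph chi (@addcharD F) (@addchar0 F)). Qed.

Lemma sum_row_prod (n : nat) (f : 'I_n -> F -> algC) :
  \sum_(X : 'rV[F]_n) \prod_i f i (X 0 i) = \prod_i \sum_t f i t.
Proof.
rewrite bigA_distr_bigA (reindex (fun g : {ffun 'I_n -> F} => \row_i g i)) /=.
  by apply: eq_bigr => g _; apply: eq_bigr => i _; rewrite mxE.
exists (fun X : 'rV[F]_n => [ffun i => X 0 i]) => [g _ | X _].
  by apply/ffunP => i; rewrite ffunE mxE.
by apply/rowP => i; rewrite mxE ffunE.
Qed.

End Gauss.
Section Main.
Variable F : finFieldType.
Hypothesis Hodd : odd #|F|.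
Variables (d : nat) (eps r : F).
Hypotheses (eps0 : eps != 0) (r0 : r != 0).
Local Notation q := (#|F|%:R : algC).
Local Notation chi := (@addchar F).
Local Notation eta := (@qchar F).

Definition cf (i : 'I_(d + d)) : F :=
  if (i < d)%N then coefQ d eps i else - r * coefQ d eps (i - d).

Lemma q_neq0 : q != 0.
Proof. by rewrite pnatr_eq0 -lt0n; apply: leq_trans (finNzRing_gt1 F). Qed.

Lemma four_neq0 : (4%:R : F) != 0.
Proof. by rewrite -[4%N]/(2 * 2)%N natrM mulf_neq0 // two_neq0. Qed.

Lemma coefQ_neq0 j : coefQ d eps j != 0.
Proof.
rewrite /coefQ; case: ifP => _; first by rewrite expf_neq0 // oppr_eq0 oner_eq0.
by case: odd; rewrite ?oppr_eq0.
Qed.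

Lemma coefQ_inv j : coefQ d eps^-1 j = (coefQ d eps j)^-1.
Proof.
rewrite /coefQ; case: ifP => _; first by rewrite -exprVn invrN1.
by case: odd; rewrite ?invrN.
Qed.

Lemma cf_neq0 i : cf i != 0.
Proof. by rewrite /cf; case: ifP => _; rewrite ?mulf_neq0 ?oppr_eq0 ?coefQ_neq0. Qed.

Lemma E_split (X : 'rV[F]_(d + d)) :
  normQ d eps (lsubmx X) - r * normQ d eps (rsubmx X) = \sum_i cf i * X 0 i ^+ 2.
Proof.
rewrite big_split_ord /= /normQ; congr (_ + _).
  by apply: eq_bigr => i _; rewrite /cf /= (ltn_ord i) mxE.
rewrite mulr_sumr -sumrN; apply: eq_bigr => i _.
rewrite /cf /= ltnNge leq_addr /= addKn mxE; ring.
Qed.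

Lemma Estar_split (M : 'rV[F]_(d + d)) :
  normQstar d eps (lsubmx M) - r^-1 * normQstar d eps (rsubmx M) = \sum_i M 0 i ^+ 2 / cf i.
Proof.
rewrite big_split_ord /= /normQstar /normQ; congr (_ + _).
  by apply: eq_bigr => i _; rewrite /cf /= (ltn_ord i) mxE coefQ_inv mulrC.
rewrite mulr_sumr -sumrN; apply: eq_bigr => i _.
rewrite /cf /= ltnNge leq_addr /= addKn mxE coefQ_inv.
have := coefQ_neq0 i; move: (coefQ d eps i) => c c0.
field; by rewrite c0 oppr_eq0 r0.
Qed.


Variable M : 'rV[F]_(d + d).

Lemma VQ_sum (X : 'rV[F]_(d + d)) :
  VQ d eps r X = q^-1 * \sum_s chi (s * \sum_i cf i * X 0 i ^+ 2).
Proof.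
rewrite /VQ E_split.
rewrite (eq_bigr (fun s => chi ((\sum_i cf i * X 0 i ^+ 2) * s))); last by move=> s _; rewrite mulrC.
rewrite (@sum_chi_lin F Hodd); case: eqP => _ /=; first by rewrite mulVf ?q_neq0.
by rewrite mulr0.
Qed.

Lemma inner (s : F) :
  \sum_(X : 'rV[F]_(d + d)) chi (- dotv M X) * chi (s * \sum_i cf i * X 0 i ^+ 2)
  = \prod_i \sum_t chi (s * cf i * t ^+ 2 - M 0 i * t).
Proof.
rewrite -sum_row_prod; apply: eq_bigr => X _.
rewrite -addcharD -chi_sum; congr chi.
rewrite /dotv sumrB mulr_sumr addrC; congr (_ - _); apply: eq_bigr => i _; by rewrite mulrA.
Qed.

Lemma prod_s0 : \prod_i (if M 0 i == 0 then q else 0) = delta0 M * q ^+ (d + d).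
Proof.
rewrite /delta0; case: eqP => [-> | /eqP M0].
  rewrite mul1r (eq_bigr (fun _ => q)) ?prodr_const ?card_ord // => i _; by rewrite mxE eqxx.
rewrite mul0r.
case: (pickP (fun i => M 0 i != 0)) => [i hi | H].
  by rewrite (bigD1 i) //= (negPf hi) mul0r.
exfalso; move/eqP: M0; apply; apply/rowP => i; rewrite mxE.
by move: (H i) => /= /negbFE /eqP.
Qed.

Lemma prod_s {s : F} : s != 0 ->
  \prod_i (chi (- (M 0 i ^+ 2 / (4%:R * (s * cf i)))) * (eta (s * cf i) * gs F))
  = chi (- ((4%:R * s)^-1 * \sum_i M 0 i ^+ 2 / cf i)) * (eta r ^+ d * q ^+ d).
Proof.
move=> s0.
rewrite big_split /= -chi_sum big_split /= prodr_const card_ord.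
congr (_ * _).
  congr chi; rewrite mulr_sumr -sumrN; apply: eq_bigr => i _; congr (- _).
  have := cf_neq0 i; move: (cf i) => c c0.
  have f0 := four_neq0.
  field; by rewrite c0 s0 f0.
have He : \prod_i eta (s * cf i) = eta (- r) ^+ d.
  rewrite big_split_ord /= -big_split /=.
  rewrite (eq_bigr (fun _ => eta (- r))) ?prodr_const ?card_ord // => i _.
  rewrite /cf /= (ltn_ord i) ltnNge leq_addr /= addKn.
  rewrite [s * (- r * _)]mulrCA (@eta_mul F Hodd (- r)) mulrCA -expr2 eta_sqr ?mulr1 //.
  by rewrite mulf_neq0 // coefQ_neq0.
rewrite He exprD -exprMn -expr2 (@gs_sqr F Hodd) exprMn mulrA -exprMn.
by rewrite -(@eta_mul F Hodd) mulrNN mulr1.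
Qed.

Lemma sum_h (K : F) :
  \sum_(s | s != 0) chi (- ((4%:R * s)^-1 * K)) = (K == 0)%:R * q - 1.
Proof.
pose h := fun s : F => - (4%:R * s)^-1.
have hK : involutive h.
  move=> s; rewrite /h mulrN invrN opprK invfM invrK mulrA mulVf ?mul1r //.
  exact: four_neq0.
have e1 : \sum_s chi (K * h s) = \sum_u chi (K * u).
  by rewrite [RHS](reindex_inj (inv_inj hK)).
rewrite (@sum_chi_lin F Hodd) (bigD1 0) //= in e1.
have h0 : h 0 = 0 by rewrite /h mulr0 invr0 oppr0.
rewrite h0 mulr0 addchar0 in e1.
rewrite (eq_bigr (fun s => chi (K * h s))); last by move=> s _; rewrite /h mulrN mulrC.
apply/eqP; rewrite eq_sym subr_eq addrC e1.
by case: (K == 0); rewrite ?mul1r ?mul0r.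
Qed.

Lemma main_formula :
  fourier (VQ d eps r) M =
  delta0 M / q + eta r ^+ d * VQstar d eps r M / q ^+ d - eta r ^+ d / q ^+ d.+1.
Proof.
rewrite /fourier.
under eq_bigr do rewrite VQ_sum mulrCA mulr_sumr.
rewrite -mulr_sumr exchange_big /=.
under eq_bigr do rewrite inner.
under eq_bigr => s _ do rewrite (eq_bigr _ (fun i _ => @coord_sum F Hodd s (cf i) (M 0 i) (cf_neq0 i))).
rewrite (bigD1 0) //= eqxx prod_s0.
under eq_bigr => s s0 do rewrite (negPf s0) (prod_s s0).
rewrite -mulr_suml sum_h /VQstar Estar_split.
move: (delta0 M) ((_ == 0)%:R) => D V.
rewrite exprD exprSr.
have q0 := q_neq0; have Q0 : q ^+ d != 0 by rewrite expf_neq0.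
move: (q ^+ d) Q0 => Q Q0.
field; by rewrite q0 Q0.
Qed.

End Main.

Theorem proposition5p2 (F : finFieldType) (Hodd : odd #|F|) (d : nat) (hd : (2 <= d)%N)
    (A : 'M[F]_d) (hA : A^T = A) (hdet : \det A != 0)
    (eps : F) (heps0 : eps != 0)
    (heps : qchar ((-1) ^+ (d./2) * eps) = qchar (\det A))
    (r : F) (hr : r != 0) (M : 'rV[F]_(d + d)) :
  (~~ odd d ->
     fourier (VQ d eps r) M =
       delta0 M / #|F|%:R + VQstar d eps r M / #|F|%:R ^+ d - 1 / #|F|%:R ^+ d.+1) /\
  (odd d ->
     fourier (VQ d eps r) M =
       delta0 M / #|F|%:R + qchar r * VQstar d eps r M / #|F|%:R ^+ d
       - qchar r / #|F|%:R ^+ d.+1).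
Proof.
have mf := @main_formula F Hodd d eps r heps0 hr M.
have Ed : qchar r ^+ d = if odd d then qchar r else 1.
  rewrite -{1}(odd_double_half d) exprD -muln2 mulnC exprM eta_sqr // expr1n mulr1.
  by case: (odd d); rewrite ?expr1 ?expr0.
rewrite Ed in mf.
split => hd'; rewrite mf; first by rewrite (negPf hd') mul1r.
by rewrite hd'.
Qed.
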